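(* Let $\{S_1,\dots,S_m\}$ be a system of contraction maps of $\mathbb R^n$ with $r_k=\operatorname{Lip}S_k$, $\mathbf r=(r_1,\dots,r_m)$, $\bar r=\max_k r_k$. For $t\in\mathbb R^n$ let $\mathcal S_t=\{S_1,\dots,S_{m-1},S_{m,t}\}$ with $S_{m,t}(x)=S_m(x)+t$, and let $K_t$ be its attractor. Let $1\le k<m$. If $r_k+r_m+\bar r<1$ and $s_{\mathbf r}<n/2$, then $S_k(K_t)\cap S_{m,t}(K_t)=\varnothing$ for Lebesgue almost all $t\in\mathbb R^n$.
   Context: The attractor of a system of contractions $\{T_1,\dots,T_m\}$ is the unique nonempty compact set $K$ with $K=\bigcup_k T_k(K)$. $s_{\mathbf r}$ is the unique solution $s$ of $r_1^s+\dots+r_m^s=1$. *)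

(* Defs.v *)
From Stdlib Require Import Reals Lra List.
From Stdlib Require Fin.
Open Scope R_scope.

Definition vec (n : nat) := Fin.t n -> R.

Fixpoint fsum (n : nat) : (Fin.t n -> R) -> R :=
  match n with
  | O => fun _ => 0
  | S p => fun f => f Fin.F1 + fsum p (fun i => f (Fin.FS i))
  end.

Fixpoint fprod (n : nat) : (Fin.t n -> R) -> R :=
  match n with
  | O => fun _ => 1
  | S p => fun f => f Fin.F1 * fprod p (fun i => f (Fin.FS i))
  end.

Definition vadd {n} (x y : vec n) : vec n := fun i => x i + y i.

Definition vnorm {n} (x : vec n) : R := sqrt (fsum n (fun i => x i * x i)).
Definition vdist {n} (x y : vec n) : R := vnorm (fun i => x i - y i).

Definition is_lip_const {n} (f : vec n -> vec n) (L : R) : Prop :=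
  0 <= L /\ forall x y, vdist (f x) (f y) <= L * vdist x y.
Definition lip_eq {n} (f : vec n -> vec n) (L : R) : Prop :=
  is_lip_const f L /\ forall L', is_lip_const f L' -> L <= L'.

Definition is_open {n} (U : vec n -> Prop) : Prop :=
  forall x, U x -> exists eps, 0 < eps /\ forall y, vdist x y < eps -> U y.
Definition is_compact {n} (K : vec n -> Prop) : Prop :=
  forall (I : Type) (U : I -> vec n -> Prop),
    (forall i, is_open (U i)) ->
    (forall x, K x -> exists i, U i x) ->
    exists l : list I, forall x, K x -> exists i, In i l /\ U i x.

Definition is_attractor {n} (T : nat -> vec n -> vec n) (m : nat) (K : vec n -> Prop) : Prop :=
  (exists x, K x) /\ is_compact K /\
  forall x, K x <-> exists k, (k < m)%nat /\ exists y, K y /\ x = T k y.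

(* r^s with the convention 0^s = 0 (for r <= 0) *)
Definition rpow (r s : R) : R := if Rlt_dec 0 r then Rpower r s else 0.

(* s is a solution of r_1^s + ... + r_m^s = 1 (such a solution is unique when it exists) *)
Definition sim_dim (r : nat -> R) (m : nat) (s : R) : Prop :=
  fold_right Rplus 0 (map (fun k => rpow (r k) s) (seq 0 m)) = 1.

Definition rmax (r : nat -> R) (m : nat) : R := fold_right Rmax 0 (map r (seq 0 m)).

Definition lebesgue_null {n} (E : vec n -> Prop) : Prop :=
  forall eps, 0 < eps ->
    exists a b : nat -> vec n,
      (forall j i, a j i <= b j i) /\
      (forall x, E x -> exists j, forall i, a j i <= x i <= b j i) /\
      (forall N, fold_right Rplus 0
          (map (fun j => fprod n (fun i => b j i - a j i)) (seq 0 N)) <= eps).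

(* the perturbed system S_t: last map (index m-1) translated by t *)
Definition Ssys {n} (S : nat -> vec n -> vec n) (m : nat) (t : vec n) : nat -> vec n -> vec n :=
  fun k => if Nat.eqb k (m - 1) then (fun x => vadd (S k x) t) else S k.

(* Main.v *)
Require Import Defs.
From Stdlib Require Import Reals List.
From Stdlib Require Import Lra Lia Psatz ClassicalEpsilon.
From Stdlib Require Fin.
Open Scope R_scope.
Import ListNotations.

Lemma fsum_ext n (f g : Fin.t n -> R) : (forall i, f i = g i) -> fsum n f = fsum n g.
Proof. revert f g; induction n; simpl; intros f g H; auto. rewrite H; f_equal; auto. Qed.

Lemma fsum_plus n (f g : Fin.t n -> R) : fsum n (fun i => f i + g i) = fsum n f + fsum n g.
Proof. revert f g; induction n; simpl; intros; [lra|]. rewrite IHn; lra. Qed.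

Lemma fsum_scal n c (f : Fin.t n -> R) : fsum n (fun i => c * f i) = c * fsum n f.
Proof. revert f; induction n; simpl; intros; [lra|]. rewrite IHn; lra. Qed.

Lemma fsum_nonneg n (f : Fin.t n -> R) : (forall i, 0 <= f i) -> 0 <= fsum n f.
Proof. revert f; induction n; simpl; intros f H; [lra|]. specialize (IHn (fun i => f (Fin.FS i))). simpl in IHn. pose proof (H Fin.F1). assert (0 <= fsum n (fun i => f (Fin.FS i))) by (apply IHn; auto). lra. Qed.

Lemma fsum_single n (f : Fin.t n -> R) i : (forall i, 0 <= f i) -> f i <= fsum n f.
Proof.
  revert f i; induction n; intros f i H.
  - apply (Fin.case0 (fun _ => _) i).
  - simpl. revert f H. pattern i. apply Fin.caseS'.
    + intros f H. pose proof (fsum_nonneg n (fun i => f (Fin.FS i)) (fun j => H _)). lra.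
    + intros p f H. pose proof (IHn (fun i => f (Fin.FS i)) p (fun j => H _)). pose proof (H Fin.F1). simpl in *. lra.
Qed.

Lemma fsum_CS n (x y : Fin.t n -> R) :
  (fsum n (fun i => x i * y i))^2 <= fsum n (fun i => x i * x i) * fsum n (fun i => y i * y i).
Proof.
  revert x y; induction n; simpl; intros x y; [lra|].
  specialize (IHn (fun i => x (Fin.FS i)) (fun i => y (Fin.FS i))). simpl in IHn.
  set (P := fsum n (fun i => x (Fin.FS i) * y (Fin.FS i))) in *.
  set (A := fsum n (fun i => x (Fin.FS i) * x (Fin.FS i))) in *.
  set (B := fsum n (fun i => y (Fin.FS i) * y (Fin.FS i))) in *.
  assert (HA : 0 <= A) by (apply fsum_nonneg; intros; nra).
  assert (HB : 0 <= B) by (apply fsum_nonneg; intros; nra).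
  set (a := x Fin.F1); set (b := y Fin.F1).
  assert (a*a*B + b*b*A - 2*a*b*P >= 0).
  { destruct (Req_dec A 0) as [E|E].
    - assert (P = 0). { rewrite E, Rmult_0_l in IHn. simpl in IHn. nra. } rewrite E, H. nra.
    - assert (A * (a*a*B + b*b*A - 2*a*b*P) >= 0).
      { assert (A * (a*a*B + b*b*A - 2*a*b*P) = (b*A - a*P)^2 + a*a*(A*B - P^2)) by ring.
        rewrite H. assert (0 <= a*a*(A*B-P^2)). apply Rmult_le_pos; nra. pose proof (pow2_ge_0 (b*A - a*P)). lra. }
      nra. }
  nra.
Qed.

Definition vsq {n} (x : vec n) := fsum n (fun i => x i * x i).

Lemma vsq_nonneg {n} (x : vec n) : 0 <= vsq x.
Proof. apply fsum_nonneg; intros; nra. Qed.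

Lemma vnorm_nonneg {n} (x : vec n) : 0 <= vnorm x.
Proof. apply sqrt_pos. Qed.

Lemma vnorm_ext {n} (x y : vec n) : (forall i, x i = y i) -> vnorm x = vnorm y.
Proof. intros H; unfold vnorm; f_equal; apply fsum_ext; intros; rewrite H; auto. Qed.

Lemma vnorm_tri {n} (x y : vec n) : vnorm (fun i => x i + y i) <= vnorm x + vnorm y.
Proof.
  unfold vnorm.
  assert (E : fsum n (fun i => (x i + y i) * (x i + y i)) =
     vsq x + 2 * fsum n (fun i => x i * y i) + vsq y).
  { unfold vsq. rewrite <- fsum_scal, <- !fsum_plus. apply fsum_ext; intros; ring. }
  rewrite E. fold (vsq x) (vsq y).
  pose proof (vsq_nonneg x); pose proof (vsq_nonneg y).
  pose proof (fsum_CS n x y). fold (vsq x) (vsq y) in H1.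
  set (P := fsum n (fun i => x i * y i)) in *.
  assert (P <= sqrt (vsq x) * sqrt (vsq y)).
  { rewrite <- sqrt_mult by auto. destruct (Rle_dec P 0). pose proof (sqrt_pos (vsq x * vsq y)); lra.
    rewrite <- (sqrt_pow2 P) by lra. apply sqrt_le_1_alt. lra. }
  rewrite <- (sqrt_pow2 (sqrt (vsq x) + sqrt (vsq y))).
  2: { pose proof (sqrt_pos (vsq x)); pose proof (sqrt_pos (vsq y)); lra. }
  apply sqrt_le_1_alt.
  replace ((sqrt (vsq x) + sqrt (vsq y))^2) with
    (sqrt (vsq x) * sqrt (vsq x) + 2 * (sqrt (vsq x) * sqrt (vsq y)) + sqrt (vsq y) * sqrt (vsq y)) by ring.
  rewrite !sqrt_sqrt by auto. lra.
Qed.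

Lemma vnorm_opp {n} (x : vec n) : vnorm (fun i => - x i) = vnorm x.
Proof. unfold vnorm; f_equal; apply fsum_ext; intros; ring. Qed.

Lemma vnorm_sub {n} (x y : vec n) : vnorm (fun i => x i - y i) <= vnorm x + vnorm y.
Proof. rewrite <- (vnorm_opp y). apply (vnorm_tri x (fun i => - y i)). Qed.

Lemma vnorm_coord {n} (x : vec n) i : Rabs (x i) <= vnorm x.
Proof.
  unfold vnorm. rewrite <- sqrt_Rsqr_abs. apply sqrt_le_1_alt. unfold Rsqr.
  apply (fsum_single n (fun i => x i * x i)); intros; nra.
Qed.

Lemma vdist_sym {n} (x y : vec n) : vdist x y = vdist y x.
Proof. unfold vdist. rewrite <- vnorm_opp. apply vnorm_ext; intros; ring. Qed.

Lemma vdist_tri {n} (x y z : vec n) : vdist x z <= vdist x y + vdist y z.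
Proof. unfold vdist. eapply Rle_trans; [|apply vnorm_tri]. right; apply vnorm_ext; intros; simpl; ring. Qed.

Lemma vdist_nonneg {n} (x y : vec n) : 0 <= vdist x y.
Proof. apply vnorm_nonneg. Qed.


Definition sumf {A} (f : A -> R) (l : list A) := fold_right Rplus 0 (map f l).

Lemma sumf_app {A} (f : A -> R) l1 l2 : sumf f (l1 ++ l2) = sumf f l1 + sumf f l2.
Proof. unfold sumf; induction l1; simpl; [lra|]. rewrite IHl1; lra. Qed.

Lemma sumf_flat_map {A B} (f : B -> R) (g : A -> list B) l :
  sumf f (flat_map g l) = sumf (fun a => sumf f (g a)) l.
Proof. induction l; simpl; [reflexivity|]. rewrite sumf_app, IHl. reflexivity. Qed.

Lemma sumf_map {A B} (f : B -> R) (g : A -> B) l : sumf f (map g l) = sumf (fun a => f (g a)) l.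
Proof. unfold sumf; rewrite map_map; reflexivity. Qed.

Lemma sumf_le {A} (f g : A -> R) l : (forall x, In x l -> f x <= g x) -> sumf f l <= sumf g l.
Proof. induction l; simpl; intros H; unfold sumf; simpl; [lra|].
  pose proof (H a (or_introl eq_refl)). assert (sumf f l <= sumf g l) by (apply IHl; auto).
  unfold sumf in H1; lra. Qed.

Lemma sumf_scal {A} c (f : A -> R) l : sumf (fun x => c * f x) l = c * sumf f l.
Proof. unfold sumf; induction l; simpl; [lra|]. rewrite IHl; lra. Qed.

Lemma sumf_nonneg {A} (f : A -> R) l : (forall x, In x l -> 0 <= f x) -> 0 <= sumf f l.
Proof. unfold sumf; induction l; simpl; intros H; [lra|].
  pose proof (H a (or_introl eq_refl)). assert (0 <= fold_right Rplus 0 (map f l)) by (apply IHl; auto). lra. Qed.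

Lemma sumf_ext {A} (f g : A -> R) l : (forall x, In x l -> f x = g x) -> sumf f l = sumf g l.
Proof. unfold sumf; induction l; simpl; intros H; auto. rewrite H, IHl; auto. Qed.

Lemma sumf_in {A} (f : A -> R) l x : (forall x, In x l -> 0 <= f x) -> In x l -> f x <= sumf f l.
Proof. induction l; simpl; intros H Hx; [contradiction|]. unfold sumf; simpl; fold (sumf f l).
  destruct Hx as [<-|Hx].
  - pose proof (sumf_nonneg f l (fun y Hy => H y (or_intror Hy))); lra.
  - pose proof (H a (or_introl eq_refl)). pose proof (IHl (fun y Hy => H y (or_intror Hy)) Hx). lra. Qed.

Lemma sumf_const {A} c (l : list A) : sumf (fun _ => c) l = INR (length l) * c.
Proof. unfold sumf; induction l; cbn [length map fold_right]; [simpl; lra|]. rewrite IHl, S_INR; lra. Qed.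

Lemma sumf_zero {A} (f : A -> R) l : (forall x, In x l -> f x = 0) -> sumf f l = 0.
Proof. intros H. unfold sumf; induction l; simpl; auto. rewrite H by (left; auto). rewrite IHl; [lra|]. intros; apply H; right; auto. Qed.

Lemma rmax_ge r m j : (j < m)%nat -> r j <= rmax r m.
Proof. unfold rmax. intros H. assert (In j (seq 0 m)) by (apply in_seq; lia).
  revert H0; generalize (seq 0 m). induction l; simpl; [tauto|]. intros [<-|Hj].
  apply Rmax_l. eapply Rle_trans; [apply IHl; auto| apply Rmax_r]. Qed.

Lemma rmax_nonneg r m : 0 <= rmax r m.
Proof. unfold rmax. generalize (seq 0 m). induction l; simpl; [lra|]. eapply Rle_trans; [apply IHl|apply Rmax_r]. Qed.

Definition zero {n} : vec n := fun _ => 0.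

Lemma vnorm_zero n : vnorm (@zero n) = 0.
Proof. unfold vnorm, zero. assert (forall p, fsum p (fun _ : Fin.t p => 0 * 0) = 0).
  { induction p; simpl; auto. rewrite IHp. ring. }
  rewrite H. apply sqrt_0. Qed.

Lemma vdist_refl {n} (x : vec n) : vdist x x = 0.
Proof. unfold vdist. rewrite <- (vnorm_zero n). apply vnorm_ext; intros; unfold zero; ring. Qed.

Lemma vdist_zero {n} (x : vec n) : vdist x zero = vnorm x.
Proof. unfold vdist. apply vnorm_ext; intros; unfold zero; ring. Qed.

Lemma compact_bounded {n} (K : vec n -> Prop) : is_compact K -> exists M, forall y, K y -> vnorm y <= M.
Proof.
  intros HK. destruct (HK (vec n) (fun c y => vdist c y < 1)) as [l Hl].
  - intros c y Hy. exists (1 - vdist c y). split; [lra|]. intros y' H'.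
    pose proof (vdist_tri c y y'). lra.
  - intros x _. exists x. rewrite vdist_refl; lra.
  - exists (sumf (fun c => vnorm c + 1) l). intros y Hy. destruct (Hl y Hy) as [c [Hc Hcy]].
    eapply Rle_trans; [|apply (sumf_in (fun c => vnorm c + 1) l c); auto].
    2: { intros; pose proof (vnorm_nonneg x); lra. }
    rewrite <- !vdist_zero. pose proof (vdist_tri y c zero). rewrite (vdist_sym y c) in H. lra.
Qed.

Fixpoint Tw {n} (T : nat -> vec n -> vec n) (w : list nat) (z : vec n) : vec n :=
  match w with nil => z | j :: w' => T j (Tw T w' z) end.

Fixpoint rw (rho : nat -> R) (w : list nat) : R :=
  match w with nil => 1 | j :: w' => rho j * rw rho w' end.

Fixpoint Wd (m : nat) (rho : nat -> R) (d : R) (N : nat) (a : R) : list (list nat) :=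
  if Rle_dec a d then [nil] else
  match N with
  | O => [nil]
  | S N' => flat_map (fun j => map (cons j) (Wd m rho d N' (a * rho j))) (seq 0 m)
  end.

Lemma Wd_letters m rho d N a w : In w (Wd m rho d N a) -> forall j, In j w -> (j < m)%nat.
Proof.
  revert a w; induction N; intros a w; simpl; destruct (Rle_dec a d); simpl;
    try (intros [<-|[]]; simpl; tauto).
  intros Hw. apply in_flat_map in Hw as [j [Hj Hw]]. apply in_map_iff in Hw as [w' [<- Hw']].
  intros i [<-|Hi]. apply in_seq in Hj; lia. eapply IHN; eauto.
Qed.

Lemma Wd_cover {n} m rho d N a (T : nat -> vec n -> vec n) (K : vec n -> Prop) :
  (forall y, K y -> exists j, (j < m)%nat /\ exists z, K z /\ y = T j z) ->
  forall y, K y -> exists w, In w (Wd m rho d N a) /\ exists z, K z /\ y = Tw T w z.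
Proof.
  intros HK. revert a; induction N; intros a y Hy; simpl; destruct (Rle_dec a d);
    try (exists nil; split; [left; auto| exists y; auto]).
  destruct (HK y Hy) as [j [Hj [y0 [Hy0 ->]]]].
  destruct (IHN (a * rho j) y0 Hy0) as [w [Hw [z [Hz ->]]]].
  exists (j :: w). split. apply in_flat_map. exists j. split. apply in_seq; lia.
  apply in_map; auto. exists z; auto.
Qed.

Lemma Wd_upper m rho d N a rM w : 0 <= a -> (forall j, (j < m)%nat -> 0 <= rho j <= rM) ->
  a * rM ^ N <= d -> In w (Wd m rho d N a) -> a * rw rho w <= d.
Proof.
  revert a w; induction N; intros a w Ha Hr Hd; simpl; destruct (Rle_dec a d); simpl;
    try (intros [<-|[]]; simpl; lra).
  intros Hw. apply in_flat_map in Hw as [j [Hj Hw]]. apply in_map_iff in Hw as [w' [<- Hw']].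
  apply in_seq in Hj. simpl. pose proof (Hr j ltac:(lia)) as Hrj.
  rewrite <- Rmult_assoc. apply (IHN (a * rho j)); auto. nra.
  simpl in Hd. assert (0 <= rM ^ N) by (apply pow_le; lra).
  assert (a * rho j * rM ^ N <= a * (rM * rM ^ N)).
  { rewrite Rmult_assoc. apply Rmult_le_compat_l; auto. apply Rmult_le_compat_r; lra. }
  lra.
Qed.

Lemma Wd_lower m rho d N a eta w : 0 < a -> 0 < eta -> (forall j, (j < m)%nat -> eta <= rho j) ->
  In w (Wd m rho d N a) -> Rmin a (eta * d) <= a * rw rho w.
Proof.
  revert a w; induction N; intros a w Ha He Hr; simpl; destruct (Rle_dec a d); simpl;
    try (intros [<-|[]]; simpl; pose proof (Rmin_l a (eta*d)); lra).
  intros Hw. apply in_flat_map in Hw as [j [Hj Hw]]. apply in_map_iff in Hw as [w' [<- Hw']].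
  apply in_seq in Hj. simpl. specialize (Hr j ltac:(lia)) as Hj'.
  rewrite <- Rmult_assoc. eapply Rle_trans; [|apply (IHN (a * rho j)); auto; nra].
  assert (eta * d < a * rho j) by nra.
  unfold Rmin. destruct (Rle_dec a (eta*d)); destruct (Rle_dec (a * rho j) (eta*d)); lra.
Qed.

Lemma rw_pos rho m w : (forall j, (j < m)%nat -> 0 < rho j) -> (forall j, In j w -> (j < m)%nat) -> 0 < rw rho w.
Proof. induction w; simpl; intros; [lra|]. apply Rmult_lt_0_compat; auto. Qed.

Lemma Wd_sum m rho d N a q : 0 < a -> (forall j, (j < m)%nat -> 0 < rho j) ->
  sumf (fun j => Rpower (rho j) q) (seq 0 m) <= 1 ->
  sumf (fun w => Rpower (a * rw rho w) q) (Wd m rho d N a) <= Rpower a q.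
Proof.
  revert a; induction N; intros a Ha Hr Hs; simpl; destruct (Rle_dec a d); simpl;
    try (unfold sumf; simpl; rewrite Rmult_1_r; lra).
  rewrite sumf_flat_map.
  apply Rle_trans with (sumf (fun j => Rpower a q * Rpower (rho j) q) (seq 0 m)).
  - apply sumf_le. intros j Hj. apply in_seq in Hj. rewrite sumf_map. simpl.
    rewrite Rpower_mult_distr by (auto; apply Hr; lia).
    eapply Rle_trans; [|apply (IHN (a * rho j))]; auto.
    + right. apply sumf_ext. intros w _. f_equal. ring.
    + apply Rmult_lt_0_compat; auto; apply Hr; lia.
  - rewrite sumf_scal. assert (0 < Rpower a q) by apply exp_pos. nra.
Qed.


Lemma Rdiv_le_0_compat a b : 0 <= a -> 0 < b -> 0 <= a / b.
Proof. intros; unfold Rdiv; apply Rmult_le_pos; auto; left; apply Rinv_0_lt_compat; auto. Qed.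
Lemma Rdiv_lt_0_compat' a b : 0 < a -> 0 < b -> 0 < a / b.
Proof. intros; unfold Rdiv; apply Rmult_lt_0_compat; auto; apply Rinv_0_lt_compat; auto. Qed.

Lemma Ssys_step {n} (S : nat -> vec n -> vec n) m r t1 t2 j x1 x2 :
  is_lip_const (S j) (r j) ->
  vdist (Ssys S m t1 j x1) (Ssys S m t2 j x2) <= r j * vdist x1 x2 + vdist t1 t2.
Proof.
  intros [H0 H]. unfold Ssys. destruct (Nat.eqb j (m-1)).
  - unfold vdist, vadd. eapply Rle_trans.
    2: { apply Rplus_le_compat_r. apply (H x1 x2). }
    unfold vdist. eapply Rle_trans; [|apply vnorm_tri]. right; apply vnorm_ext; intros; ring.
  - pose proof (H x1 x2). pose proof (vdist_nonneg t1 t2). lra.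
Qed.

Lemma Tw_step {n} (T1 T2 : nat -> vec n -> vec n) m r rho rb X w z1 z2 :
  (forall j, (j < m)%nat -> forall x1 x2, vdist (T1 j x1) (T2 j x2) <= r j * vdist x1 x2 + X) ->
  (forall j, (j < m)%nat -> 0 <= r j <= rho j /\ r j <= rb) -> rb < 1 -> 0 <= X ->
  (forall j, In j w -> (j < m)%nat) ->
  vdist (Tw T1 w z1) (Tw T2 w z2) <= rw rho w * vdist z1 z2 + X / (1 - rb).
Proof.
  intros HT Hr Hrb HX. set (Y := X / (1 - rb)).
  assert (HY : X = (1 - rb) * Y) by (unfold Y; field; lra).
  assert (0 <= Y) by (unfold Y; apply Rdiv_le_0_compat; lra).
  pose proof (vdist_nonneg z1 z2) as Hd.
  induction w as [|j w IH]; simpl; intros Hw.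
  - lra.
  - assert (Hj : (j < m)%nat) by (apply Hw; left; auto).
    assert (IH' := IH (fun i Hi => Hw i (or_intror Hi))).
    destruct (Hr j Hj) as [[Hr0 Hr1] Hr2].
    assert (0 <= rw rho w).
    { clear IH IH'. induction w; simpl; [lra|]. apply Rmult_le_pos.
      destruct (Hr a (Hw a (or_intror (or_introl eq_refl)))); lra.
      apply IHw. intros i [<-|Hi]; apply Hw; simpl; tauto. }
    eapply Rle_trans; [apply HT; auto|].
    assert (r j * vdist (Tw T1 w z1) (Tw T2 w z2) <= r j * (rw rho w * vdist z1 z2 + Y)) by
      (apply Rmult_le_compat_l; auto).
    assert (r j * (rw rho w * vdist z1 z2) <= rho j * (rw rho w * vdist z1 z2)) by
      (apply Rmult_le_compat_r; auto; apply Rmult_le_pos; auto).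
    assert (r j * Y <= rb * Y) by (apply Rmult_le_compat_r; auto).
    rewrite HY. nra.
Qed.

Lemma Ssys_norm {n} (S : nat -> vec n -> vec n) m r t j y :
  is_lip_const (S j) (r j) ->
  vnorm (Ssys S m t j y) <= r j * vnorm y + vnorm (S j zero) + vnorm t.
Proof.
  intros H. rewrite <- !vdist_zero.
  pose proof (vdist_tri (Ssys S m t j y) (Ssys S m zero j zero) zero).
  pose proof (Ssys_step S m r t zero j y zero H).
  assert (vdist (Ssys S m zero j zero) zero = vdist (S j zero) zero).
  { unfold Ssys. destruct (Nat.eqb j (m-1)); auto. unfold vdist, vadd, zero. apply vnorm_ext; intros; ring. }
  lra.
Qed.

Lemma attr_bound {n} (T : nat -> vec n -> vec n) m K rb B :
  is_attractor T m K -> (forall j, (j < m)%nat -> forall y, vnorm (T j y) <= rb * vnorm y + B) ->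
  0 <= rb < 1 -> 0 <= B -> forall y, K y -> vnorm y <= B / (1 - rb).
Proof.
  intros [_ [Hc HK]] HT Hrb HB. set (Q := B / (1 - rb)).
  assert (HQ : B = (1 - rb) * Q) by (unfold Q; field; lra).
  assert (0 <= Q) by (unfold Q; apply Rdiv_le_0_compat; lra).
  destruct (compact_bounded K Hc) as [M0 HM0].
  set (M := Rmax M0 0).
  assert (0 <= M) by apply Rmax_r.
  assert (Hit : forall N y, K y -> vnorm y <= Q + rb ^ N * M).
  { induction N; intros y Hy.
    - simpl. pose proof (HM0 y Hy). pose proof (Rmax_l M0 0). fold M in H2. lra.
    - destruct (proj1 (HK y) Hy) as [j [Hj [z [Hz ->]]]].
      eapply Rle_trans; [apply HT; auto|]. pose proof (IHN z Hz).
      assert (rb * vnorm z <= rb * (Q + rb ^ N * M)) by (apply Rmult_le_compat_l; lra).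
      simpl. nra. }
  intros y Hy. destruct (Rle_dec (vnorm y) Q) as [|Hlt]; auto. exfalso.
  assert (He : 0 < (vnorm y - Q) / (M + 1)) by (apply Rdiv_lt_0_compat; lra).
  destruct (pow_lt_1_zero rb ltac:(rewrite Rabs_pos_eq; lra) _ He) as [N HN].
  specialize (HN N (le_n N)). rewrite Rabs_pos_eq in HN by (apply pow_le; lra).
  pose proof (Hit N y Hy).
  assert (rb ^ N * (M + 1) < vnorm y - Q).
  { apply (Rmult_lt_compat_r (M+1)) in HN; [|lra]. unfold Rdiv in HN. rewrite Rmult_assoc, Rinv_l in HN; lra. }
  assert (0 <= rb ^ N) by (apply pow_le; lra).
  nra.
Qed.


Lemma fprod_ext n (f g : Fin.t n -> R) : (forall i, f i = g i) -> fprod n f = fprod n g.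
Proof. revert f g; induction n; simpl; intros f g H; auto. rewrite H; f_equal; auto. Qed.

Lemma fprod_const n c : fprod n (fun _ => c) = c ^ n.
Proof. induction n; simpl; auto. rewrite IHn; auto. Qed.

Lemma sumf_plus {A} (f g : A -> R) l : sumf (fun x => f x + g x) l = sumf f l + sumf g l.
Proof. unfold sumf; induction l; simpl; [lra|]. rewrite IHl; lra. Qed.

Lemma sum_seq_bound (f : nat -> R) V len : 0 <= V -> (forall j, (j < len)%nat -> f j <= V) ->
  (forall j, (len <= j)%nat -> f j <= 0) ->
  forall N a, fold_right Rplus 0 (map f (seq a N)) <= V * INR (len - a).
Proof.
  intros HV H1 H2. induction N; intros a; simpl.
  - apply Rmult_le_pos; auto. apply pos_INR.
  - specialize (IHN (S a)). destruct (Nat.lt_ge_cases a len).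
    + replace (len - a)%nat with (S (len - S a)) by lia. rewrite S_INR. specialize (H1 a H). lra.
    + replace (len - S a)%nat with 0%nat in IHN by lia. replace (len - a)%nat with 0%nat by lia.
      specialize (H2 a H). lra.
Qed.

Lemma rpow_nonneg x y : 0 <= rpow x y.
Proof. unfold rpow; destruct (Rlt_dec 0 x); [left; apply exp_pos| lra]. Qed.

Lemma Rpower_pos x y : 0 < Rpower x y.
Proof. apply exp_pos. Qed.

Lemma Rpower_lt1 x y : 0 < x < 1 -> 0 < y -> Rpower x y < 1.
Proof. intros [H0 H1] Hy. unfold Rpower. rewrite <- exp_0. apply exp_increasing.
  assert (ln x < 0) by (rewrite <- ln_1; apply ln_increasing; lra). nra. Qed.

Lemma Rpower_inv_pow x q : 0 < x -> q <> 0 -> Rpower (Rpower x (/ q)) q = x.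
Proof. intros. rewrite Rpower_mult. rewrite Rinv_l by auto. apply Rpower_1; auto. Qed.


Theorem corollary6 (n m : nat) (S : nat -> vec n -> vec n) (r : nat -> R)
  (K : vec n -> vec n -> Prop) (s : R) (k : nat) :
  (forall j, (j < m)%nat -> lip_eq (S j) (r j) /\ r j < 1) ->
  (forall t, is_attractor (Ssys S m t) m (K t)) ->
  sim_dim r m s ->
  (k < m - 1)%nat ->
  r k + r (m - 1)%nat + rmax r m < 1 ->
  s < INR n / 2 ->
  lebesgue_null (fun t => exists x,
     (exists y, K t y /\ x = S k y) /\
     (exists y, K t y /\ x = vadd (S (m - 1)%nat y) t)).
Proof.
  intros HS HK Hsim Hk Hc Hs.
  set (rb := rmax r m) in *. set (rm := r (m - 1)%nat) in *.
  assert (Hlip : forall j, (j < m)%nat -> is_lip_const (S j) (r j)) by (intros j Hj; apply (HS j Hj)).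
  assert (Hr0 : forall j, (j < m)%nat -> 0 <= r j) by (intros j Hj; apply (Hlip j Hj)).
  assert (Hr1 : forall j, (j < m)%nat -> r j < 1) by (intros j Hj; apply (HS j Hj)).
  assert (Hrb : forall j, (j < m)%nat -> r j <= rb) by (intros; apply rmax_ge; auto).
  assert (Hkm : (k < m)%nat) by lia. assert (Hmm : (m - 1 < m)%nat) by lia.
  pose proof (Hr0 k Hkm). pose proof (Hr0 _ Hmm). fold rm in H0.
  assert (Hrb1 : rb < 1) by lra.
  assert (Hrb0 : 0 <= rb) by apply rmax_nonneg.
  assert (Hpos : exists j, (j < m)%nat /\ 0 < r j).
  { destruct (Classical_Prop.classic (exists j, (j < m)%nat /\ 0 < r j)) as [|Hn]; auto.
    exfalso. unfold sim_dim in Hsim. fold (sumf (fun k => rpow (r k) s) (seq 0 m)) in Hsim.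
    rewrite sumf_zero in Hsim; [lra|]. intros j Hj. apply in_seq in Hj.
    unfold rpow. destruct (Rlt_dec 0 (r j)); auto. exfalso; apply Hn; exists j; split; auto; lia. }
  destruct Hpos as [j0 [Hj0 Hj0p]].
  assert (Hrbp : 0 < rb) by (pose proof (Hrb j0 Hj0); lra).
  assert (Hn1 : (1 <= n)%nat).
  { destruct n; [|lia]. exfalso.
    assert (is_lip_const (S j0) 0).
    { split; [lra|]. intros. unfold vdist, vnorm. simpl. rewrite sqrt_0. lra. }
    pose proof (proj2 (proj1 (HS j0 Hj0)) 0 H1). lra. }
  set (c := (r k + rm) / (1 - rb)).
  assert (Hc1 : c < 1).
  { unfold c. apply (Rmult_lt_reg_r (1 - rb)); [lra|]. unfold Rdiv. rewrite Rmult_assoc, Rinv_l by lra. lra. }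
  assert (Hc0 : 0 <= c) by (unfold c; apply Rdiv_le_0_compat; lra).
  set (A := sumf (fun j => vnorm (S j zero)) (seq 0 m)).
  assert (HA : forall j, (j < m)%nat -> vnorm (S j zero) <= A).
  { intros j Hj. apply (sumf_in (fun j => vnorm (S j zero))). intros; apply vnorm_nonneg. apply in_seq; lia. }
  assert (HA0 : 0 <= A) by (apply sumf_nonneg; intros; apply vnorm_nonneg).
  assert (HSn : forall j y, (j < m)%nat -> vnorm (S j y) <= r j * vnorm y + A).
  { intros j y Hj. pose proof (vdist_tri (S j y) (S j zero) zero).
    pose proof (proj2 (Hlip j Hj) y zero). repeat rewrite vdist_zero in *. pose proof (HA j Hj). lra. }
  assert (Knorm : forall t y, K t y -> vnorm y <= (A + vnorm t) / (1 - rb)).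
  { intros t. apply (attr_bound (Ssys S m t) m (K t) rb); auto.
    2: { pose proof (vnorm_nonneg t); lra. }
    intros j Hj y. eapply Rle_trans; [apply (Ssys_norm S m r); auto|].
    pose proof (HA j Hj). pose proof (Hrb j Hj). pose proof (vnorm_nonneg y).
    assert (r j * vnorm y <= rb * vnorm y) by (apply Rmult_le_compat_r; auto). lra. }
  set (R0 := (c + 2) * A / (1 - c)).
  set (bad := fun t => exists x,
     (exists y, K t y /\ x = S k y) /\
     (exists y, K t y /\ x = vadd (S (m - 1)%nat y) t)).
  assert (Hbad : forall t, bad t -> vnorm t <= R0).
  { intros t [x [[y [Hy ->]] [y' [Hy' Hx]]]].
    assert (vnorm t <= vnorm (S k y) + vnorm (S (m-1)%nat y')).
    { eapply Rle_trans; [|apply vnorm_sub]. right. apply vnorm_ext. intros i.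
      assert (S k y i = vadd (S (m - 1)%nat y') t i) by (rewrite Hx; auto). unfold vadd in H1. lra. }
    pose proof (HSn k y Hkm). pose proof (HSn _ y' Hmm). fold rm in H3.
    pose proof (Knorm t y Hy). pose proof (Knorm t y' Hy').
    assert (r k * vnorm y + rm * vnorm y' <= c * (A + vnorm t)).
    { apply Rle_trans with (r k * ((A + vnorm t) / (1 - rb)) + rm * ((A + vnorm t) / (1 - rb))).
      apply Rplus_le_compat; apply Rmult_le_compat_l; auto.
      right. unfold c. field. lra. }
    unfold R0. apply (Rmult_le_reg_r (1 - c)); [lra|]. unfold Rdiv. rewrite Rmult_assoc, Rinv_l by lra.
    pose proof (vnorm_nonneg t). nra. }
  set (M := (A + R0) / (1 - rb)).
  assert (HM : forall t y, vnorm t <= R0 -> K t y -> vnorm y <= M).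
  { intros t y Ht Hy. eapply Rle_trans; [apply (Knorm t y Hy)|]. unfold M, Rdiv.
    apply Rmult_le_compat_r; [left; apply Rinv_0_lt_compat; lra| lra]. }

  set (q := (Rmax s 0 + INR n / 2) / 2).
  assert (HnR : 1 <= INR n) by (apply (le_INR 1); auto).
  assert (Hq0 : 0 < q) by (unfold q; pose proof (Rmax_r s 0); lra).
  assert (Hqs : s < q) by (unfold q; pose proof (Rmax_l s 0); pose proof (Rmax_r s 0); lra).
  assert (Hqn : 0 < INR n - 2 * q) by (unfold q; pose proof (Rmax_l s 0); pose proof (Rmax_r s 0);
     destruct (Rle_dec s 0); [rewrite Rmax_right by lra | rewrite Rmax_left by lra]; lra).
  assert (Hsig : sumf (fun j => rpow (r j) q) (seq 0 m) <= Rpower rb (q - s)).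
  { apply Rle_trans with (sumf (fun j => Rpower rb (q - s) * rpow (r j) s) (seq 0 m)).
    - apply sumf_le. intros j Hj. apply in_seq in Hj. unfold rpow.
      destruct (Rlt_dec 0 (r j)); [|rewrite Rmult_0_r; lra].
      replace q with (s + (q - s)) at 1 by ring. rewrite Rpower_plus. rewrite Rmult_comm.
      apply Rmult_le_compat_r; [left; apply exp_pos|]. apply Rle_Rpower_l; [lra|]. split; auto. apply Hrb; lia.
    - rewrite sumf_scal. unfold sim_dim in Hsim. fold (sumf (fun k => rpow (r k) s) (seq 0 m)) in Hsim.
      rewrite Hsim. lra. }
  assert (Hgap : Rpower rb (q - s) < 1) by (apply Rpower_lt1; lra).
  set (eta0 := (1 - Rpower rb (q - s)) / INR m).
  assert (HmR : 1 <= INR m) by (apply (le_INR 1); lia).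
  assert (Heta0 : 0 < eta0) by (apply Rdiv_lt_0_compat'; lra).
  set (eta := Rmin (Rpower eta0 (/ q)) (1/2)).
  assert (Heta : 0 < eta) by (unfold eta; apply Rmin_glb_lt; [apply exp_pos|lra]).
  assert (Heta1 : eta <= 1/2) by apply Rmin_r.
  assert (Hetaq : Rpower eta q <= eta0).
  { rewrite <- (Rpower_inv_pow eta0 q) by lra. apply Rle_Rpower_l; [lra|]. split; auto. apply Rmin_l. }
  set (rho := fun j => Rmax (r j) eta).
  set (rM := Rmax rb eta).
  assert (Hrho : forall j, (j < m)%nat -> eta <= rho j /\ r j <= rho j /\ rho j <= rM).
  { intros j Hj. unfold rho, rM. split; [apply Rmax_r|split; [apply Rmax_l|]].
    apply Rmax_lub; [eapply Rle_trans; [apply Hrb; auto|apply Rmax_l]|apply Rmax_r]. }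
  assert (HrM : 0 < rM < 1) by (unfold rM; split; [eapply Rlt_le_trans; [apply Heta|apply Rmax_r]|apply Rmax_lub_lt; lra]).
  assert (Hrhos : sumf (fun j => Rpower (rho j) q) (seq 0 m) <= 1).
  { apply Rle_trans with (sumf (fun j => rpow (r j) q + Rpower eta q) (seq 0 m)).
    - apply sumf_le. intros j Hj. apply in_seq in Hj. unfold rho, Rmax.
      destruct (Rle_dec (r j) eta).
      + pose proof (rpow_nonneg (r j) q); lra.
      + unfold rpow. destruct (Rlt_dec 0 (r j)); [|lra]. pose proof (Rpower_pos eta q); lra.
    - rewrite sumf_plus, sumf_const, length_seq.
      assert (INR m * Rpower eta q <= INR m * eta0) by (apply Rmult_le_compat_l; lra).
      unfold eta0 in H1. replace (INR m * ((1 - Rpower rb (q - s)) / INR m)) with (1 - Rpower rb (q - s)) in H1 by (field; lra).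
      lra. }

  assert (HR0 : 0 <= R0) by (unfold R0; apply Rdiv_le_0_compat; [apply Rmult_le_pos|]; lra).
  assert (HM0 : 0 <= M) by (unfold M; apply Rdiv_le_0_compat; lra).
  set (C := 4 * M / (1 - c)).
  assert (HC0 : 0 <= C) by (unfold C; apply Rdiv_le_0_compat; lra).
  set (Bp := fun (u v : list nat) (t : vec n) => vnorm t <= R0 /\ exists z z', K t z /\ K t z' /\
     S k (Tw (Ssys S m t) u z) = vadd (S (m-1)%nat (Tw (Ssys S m t) v z')) t).
  assert (Hdiam : forall delta u v t1 t2, 0 <= delta -> (forall j, In j u -> (j < m)%nat) ->
     (forall j, In j v -> (j < m)%nat) -> rw rho u <= delta -> rw rho v <= delta ->
     Bp u v t1 -> Bp u v t2 -> vdist t1 t2 <= C * delta).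
  { intros delta u v t1 t2 Hd Hu Hv Hru Hrv [Ht1 [z1 [z1' [Hz1 [Hz1' E1]]]]] [Ht2 [z2 [z2' [Hz2 [Hz2' E2]]]]].
    set (a1 := Tw (Ssys S m t1) u z1) in *. set (a2 := Tw (Ssys S m t2) u z2) in *.
    set (b1 := Tw (Ssys S m t1) v z1') in *. set (b2 := Tw (Ssys S m t2) v z2') in *.
    set (X := vdist t1 t2).
    assert (HX : X <= vdist (S k a1) (S k a2) + vdist (S (m-1)%nat b1) (S (m-1)%nat b2)).
    { unfold X, vdist. eapply Rle_trans; [|apply vnorm_sub]. right. apply vnorm_ext. intros i.
      assert (e1 : S k a1 i = vadd (S (m - 1)%nat b1) t1 i) by (rewrite E1; auto).
      assert (e2 : S k a2 i = vadd (S (m - 1)%nat b2) t2 i) by (rewrite E2; auto).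
      unfold vadd in e1, e2. lra. }
    assert (Hstep : forall (w : list nat) y1 y2, (forall j, In j w -> (j < m)%nat) ->
       vdist (Tw (Ssys S m t1) w y1) (Tw (Ssys S m t2) w y2) <= rw rho w * vdist y1 y2 + X / (1 - rb)).
    { intros w y1 y2 Hw. apply (Tw_step _ _ m r rho rb X); auto.
      - intros j Hj x1 x2. apply Ssys_step; auto.
      - intros j Hj. pose proof (Hrho j Hj). pose proof (Hr0 j Hj). pose proof (Hrb j Hj). lra.
      - apply vdist_nonneg. }
    assert (Hzz : forall y1 y2, K t1 y1 -> K t2 y2 -> vdist y1 y2 <= 2 * M).
    { intros y1 y2 H1 H2. pose proof (vdist_tri y1 zero y2). rewrite vdist_zero, (vdist_sym zero), vdist_zero in H3.
      pose proof (HM t1 y1 Ht1 H1). pose proof (HM t2 y2 Ht2 H2). lra. }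
    pose proof (Hstep u z1 z2 Hu) as Ha. pose proof (Hstep v z1' z2' Hv) as Hb.
    fold a1 a2 in Ha. fold b1 b2 in Hb.
    pose proof (Hzz z1 z2 Hz1 Hz2). pose proof (Hzz z1' z2' Hz1' Hz2').
    pose proof (proj2 (Hlip k Hkm) a1 a2) as Hka. pose proof (proj2 (Hlip _ Hmm) b1 b2) as Hmb. fold rm in Hmb.
    assert (0 <= rw rho u) by (apply Rlt_le, (rw_pos rho m); auto; intros j Hj; pose proof (Hrho j Hj); lra).
    assert (0 <= rw rho v) by (apply Rlt_le, (rw_pos rho m); auto; intros j Hj; pose proof (Hrho j Hj); lra).
    assert (rw rho u * vdist z1 z2 <= delta * (2 * M)) by (apply Rmult_le_compat; auto; apply vdist_nonneg).
    assert (rw rho v * vdist z1' z2' <= delta * (2 * M)) by (apply Rmult_le_compat; auto; apply vdist_nonneg).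
    set (Y := X / (1 - rb)) in *.
    assert (HcX : (r k + rm) * Y = c * X) by (unfold Y, c; field; lra).
    assert (r k * vdist a1 a2 <= r k * (delta * (2 * M) + Y)) by (apply Rmult_le_compat_l; lra).
    assert (rm * vdist b1 b2 <= rm * (delta * (2 * M) + Y)) by (apply Rmult_le_compat_l; lra).
    assert (HX2 : X * (1 - c) <= (r k + rm) * (delta * (2 * M))) by nra.
    assert ((r k + rm) * (delta * (2 * M)) <= 2 * M * delta) by (assert (0 <= delta * (2*M)) by nra; nra).
    unfold C. apply (Rmult_le_reg_r (1 - c)); [lra|]. unfold Rdiv.
    replace (4 * M * / (1 - c) * delta * (1 - c)) with (4 * M * delta) by (field; lra). nra. }

  unfold lebesgue_null. intros eps Heps.
  set (E := (2 * C) ^ n / (Rpower eta q * Rpower eta q)).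
  assert (HE : 0 <= E) by (unfold E; apply Rdiv_le_0_compat; [apply pow_le; lra| pose proof (Rpower_pos eta q); nra]).
  set (delta := Rmin (1/2) (Rpower (eps / (E + 1)) (/ (INR n - 2*q)))).
  assert (Hd0 : 0 < delta) by (unfold delta; apply Rmin_glb_lt; [lra|apply exp_pos]).
  assert (Hd1 : delta <= 1/2) by apply Rmin_l.
  assert (HdZ : Rpower delta (INR n - 2*q) <= eps / (E + 1)).
  { rewrite <- (Rpower_inv_pow (eps / (E+1)) (INR n - 2*q)) by (try apply Rdiv_lt_0_compat'; lra).
    apply Rle_Rpower_l; [lra|]. split; auto. apply Rmin_r. }
  destruct (pow_lt_1_zero rM ltac:(rewrite Rabs_pos_eq; lra) delta Hd0) as [N HN].
  specialize (HN N (le_n N)). rewrite Rabs_pos_eq in HN by (apply pow_le; lra).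
  set (W := Wd m rho delta N 1).
  assert (HWl : forall w, In w W -> forall j, In j w -> (j < m)%nat) by (intros w Hw; apply (Wd_letters m rho delta N 1 w Hw)).
  assert (HWu : forall w, In w W -> rw rho w <= delta).
  { intros w Hw. rewrite <- (Rmult_1_l (rw rho w)). apply (Wd_upper m rho delta N 1 rM); auto; try lra.
    intros j Hj; pose proof (Hrho j Hj); pose proof (Hr0 j Hj); lra. }
  assert (HWd : forall w, In w W -> eta * delta <= rw rho w).
  { intros w Hw. pose proof (Wd_lower m rho delta N 1 eta w ltac:(lra) Heta (fun j Hj => proj1 (Hrho j Hj)) Hw).
    rewrite Rmin_right in H1 by nra. lra. }
  assert (HWc : INR (length W) * Rpower (eta * delta) q <= 1).
  { rewrite <- sumf_const. apply Rle_trans with (sumf (fun w => Rpower (1 * rw rho w) q) W).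
    - apply sumf_le. intros w Hw. rewrite Rmult_1_l. apply Rle_Rpower_l; [lra|]. split; [nra|auto].
    - assert (H1q : Rpower 1 q = 1) by (unfold Rpower; rewrite ln_1, Rmult_0_r, exp_0; auto).
      apply Rle_trans with (Rpower 1 q); [|lra]. apply Wd_sum; auto; try lra.
      intros j Hj; pose proof (Hrho j Hj); lra. }
  set (P := list_prod W W).
  set (dd := C * delta).
  set (cen := fun j => epsilon (inhabits (@zero n)) (Bp (fst (nth j P (nil, nil))) (snd (nth j P (nil, nil))))).
  exists (fun j i => if Compare_dec.lt_dec j (length P) then cen j i - dd else 0).
  exists (fun j i => if Compare_dec.lt_dec j (length P) then cen j i + dd else 0).
  assert (Hdd : 0 <= dd) by (unfold dd; nra).
  split; [|split].
  - intros j i. destruct (Compare_dec.lt_dec j (length P)); lra.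
  - intros t Ht. pose proof (Hbad t Ht) as HtR.
    destruct Ht as [x [[y [Hy Hxy]] [y' [Hy' Hxy']]]].
    destruct (Wd_cover m rho delta N 1 (Ssys S m t) (K t) (fun y0 => proj1 (proj2 (proj2 (HK t)) y0)) y Hy) as [u [Hu [z [Hz Ez]]]].
    destruct (Wd_cover m rho delta N 1 (Ssys S m t) (K t) (fun y0 => proj1 (proj2 (proj2 (HK t)) y0)) y' Hy') as [v [Hv [z' [Hz' Ez']]]].
    assert (HP : In (u, v) P) by (apply in_prod; auto).
    destruct (In_nth P (u, v) (nil, nil) HP) as [j [Hj Hjn]].
    exists j. intros i. destruct (Compare_dec.lt_dec j (length P)); [|lia].
    assert (HB : Bp u v t).
    { split; auto. exists z, z'. split; auto. split; auto. rewrite <- Ez, <- Ez', <- Hxy. auto. }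
    assert (Hc' : Bp u v (cen j)).
    { unfold cen. rewrite Hjn. simpl. apply epsilon_spec. exists t; auto. }
    pose proof (Hdiam delta u v t (cen j) ltac:(lra) (HWl u Hu) (HWl v Hv) (HWu u Hu) (HWu v Hv) HB Hc').
    pose proof (vnorm_coord (fun i => t i - cen j i) i). fold dd in H1.
    unfold vdist in H1. revert H2. unfold Rabs. destruct (Rcase_abs _); intros; lra.
  - intros N0. replace (seq 0 N0) with (seq 0 N0) by reflexivity.
    eapply Rle_trans; [apply (sum_seq_bound _ ((2 * dd) ^ n) (length P))|].
    + apply pow_le; lra.
    + intros j Hj. right. rewrite <- fprod_const. apply fprod_ext. intros i.
      destruct (Compare_dec.lt_dec j (length P)); [ring|lia].
    + intros j Hj. right. rewrite (fprod_ext n _ (fun _ => 0)).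
      * rewrite fprod_const. apply pow_i. lia.
      * intros i. destruct (Compare_dec.lt_dec j (length P)); [lia|ring].
    + rewrite Nat.sub_0_r. unfold P. rewrite length_prod, mult_INR.
      set (L := INR (length W)) in *.
      assert (HL : 0 <= L) by apply pos_INR.
      set (Hq := Rpower eta q). set (Pd := Rpower delta q). set (Z := Rpower delta (INR n - 2 * q)).
      assert (HHq : 0 < Hq) by apply Rpower_pos. assert (HPd : 0 < Pd) by apply Rpower_pos.
      assert (HZ : 0 < Z) by apply Rpower_pos.
      assert (E1 : Rpower (eta * delta) q = Hq * Pd) by (unfold Hq, Pd; rewrite Rpower_mult_distr; auto).
      rewrite E1 in HWc.
      assert (E2 : (2 * dd) ^ n = (2 * C) ^ n * (Z * Pd * Pd)).
      { unfold dd. replace (2 * (C * delta)) with ((2 * C) * delta) by ring. rewrite Rpow_mult_distr.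
        f_equal. rewrite <- Rpower_pow by auto. unfold Z, Pd. rewrite <- !Rpower_plus. f_equal. ring. }
      rewrite E2.
      assert (HLP : L * Pd <= / Hq).
      { apply (Rmult_le_reg_l Hq); auto. rewrite Rinv_r by lra. nra. }
      assert (HLP2 : (L * Pd) * (L * Pd) <= / Hq * / Hq).
      { apply Rmult_le_compat; auto; apply Rmult_le_pos; auto; lra. }
      assert (H2C : 0 <= (2 * C) ^ n) by (apply pow_le; lra).
      apply Rle_trans with ((2 * C) ^ n * Z * (/ Hq * / Hq)).
      * replace ((2 * C) ^ n * (Z * Pd * Pd) * (L * L)) with (((2 * C) ^ n * Z) * ((L * Pd) * (L * Pd))) by ring.
        apply Rmult_le_compat_l; auto. apply Rmult_le_pos; lra.
      * replace ((2 * C) ^ n * Z * (/ Hq * / Hq)) with (E * Z) by (assert (Hq <> 0) by lra; unfold E; fold Hq; field; auto).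
        apply Rle_trans with (E * (eps / (E + 1))). apply Rmult_le_compat_l; auto.
        unfold Rdiv. apply (Rmult_le_reg_r (E + 1)); [lra|].
        rewrite !Rmult_assoc, Rinv_l by lra. nra.
Qed.
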